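(* Let $\mathfrak{A}=(Q,\Sigma_I\times\Sigma_O,q_\iota,\delta,\Omega)$ be a deterministic parity automaton and let $k>0$. If Player~$O$ wins the delay game $\Gamma_k(L(\mathfrak{A}))$, then she wins the game $\mathcal{G}_k$.
   Context: DPA: $\mathfrak{A}$ has finite state set $Q$, initial state $q_\iota$, transition function $\delta\colon Q\times(\Sigma_I\times\Sigma_O)\to Q$, coloring $\Omega\colon Q\to\mathbb{N}$; a run $q_0q_1\cdots$ ($q_0=q_\iota$, $q_{i+1}=\delta(q_i,\text{$i$-th letter})$) is accepting iff $\limsup_i\Omega(q_i)$ is even; $L(\mathfrak{A})$ is the set of words with accepting run. Delay game $\Gamma_k(L)$: in round $0$ Player~$I$ picks $a_0\cdots a_k\in\Sigma_I$, then Player~$O$ picks $b_0\in\Sigma_O$; in round $i>0$ Player~$I$ picks $a_{k+i}$, then Player~$O$ picks $b_i$. A strategy for $O$ is $\sigma\colon\Sigma_I^*\to\Sigma_O$, an outcome is consistent with it if $b_i=\sigma(a_0\cdots a_{i+k})$ for all $i$, it is winning if all consistent outcomes $\binom{a_0}{b_0}\binom{a_1}{b_1}\cdots$ lie in $L$, and $O$ wins if she has a winning strategy. The game $\mathcal{G}_k$: let $C=\Omega(Q)$. Define $\delta_\mathcal{T}((q,c),\binom{a}{b})=(q',\max\{c,\Omega(q')\})$ with $q'=\delta(q,\binom{a}{b})$, and $\delta_\mathcal{P}\colon 2^{Q\times C}\times\Sigma_I\to 2^{Q\times C}$ by $\delta_\mathcal{P}(S,a)=\bigcup_{(q,c)\in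 S}\bigcup_{b\in\Sigma_O}\{\delta_\mathcal{T}((q,c),\binom{a}{b})\}$, extended to words by $\delta^*_\mathcal{P}(S,\epsilon)=S$, $\delta^*_\mathcal{P}(S,wa)=\delta_\mathcal{P}(\delta^*_\mathcal{P}(S,w),a)$. For nonempty $D\subseteq Q\times C$ and $w\in\Sigma_I^*$ let $r^D_w\colon D\to 2^{Q\times C}$, $r^D_w(q,c)=\delta^*_\mathcal{P}(\{(q,\Omega(q))\},w)$. Let $\mathfrak{R}=\{r^D_w : w\in\Sigma_I^k,\ \emptyset\ne D\subseteq Q\times C\}$ (partial functions $Q\times C\rightharpoonup 2^{Q\times C}$ with domain $\mathrm{dom}(r)$). In $\mathcal{G}_k$, in each round $i\in\mathbb{N}$ Player~$I$ picks $r_i\in\mathfrak{R}$ and then Player~$O$ picks $(q_i,c_i)\in Q\times C$, subject to: $\mathrm{dom}(r_0)=\{(q_\iota,\Omega(q_\iota))\}$, $\mathrm{dom}(r_i)=r_{i-1}(q_{i-1},c_{i-1})$ for $i>0$, and $(q_i,c_i)\in\mathrm{dom}(r_i)$ for all $i$. A play is won by Player~$O$ iff $\limsup_i c_i$ is even. A strategy for $O$ maps each prefix $r_0(q_0,c_0)\cdots r_i$ to a legal $(q_i,c_i)$; she wins $\mathcal{G}_k$ if she has a strategy all of whose consistent plays she wins. *)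

(* Defs.v *)
From mathcomp Require Import all_boot.
Set Implicit Arguments. Unset Strict Implicit. Unset Printing Implicit Defensive.

Definition limsup_even (s : nat -> nat) : Prop :=
  exists c, ~~ odd c /\ (forall N, exists2 n, N <= n & s n = c)
                      /\ (exists N, forall n, N <= n -> s n <= c).

Section DPA.
Variables (Q SI SO : finType).
Variable delta : Q -> SI * SO -> Q.
Variable qi : Q.
Variable Omega : Q -> nat.

Fixpoint run (w : nat -> SI * SO) (n : nat) : Q :=
  if n is m.+1 then delta (run w m) (w m) else qi.

Definition accepts (w : nat -> SI * SO) : Prop :=
  limsup_even (fun n => Omega (run w n)).

Definition delay_win (k : nat) : Prop :=
  exists sigma : seq SI -> SO,
    forall a : nat -> SI, accepts (fun i => (a i, sigma (mkseq a (i + k).+1))).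

Definition C := seq_sub (codom Omega).
Definition OmC (q : Q) : C := SeqSub (codom_f Omega q).
Definition maxC (c1 c2 : C) : C := if ssval c1 <= ssval c2 then c2 else c1.

Definition deltaT (x : Q * C) (ab : SI * SO) : Q * C :=
  let q' := delta x.1 ab in (q', maxC x.2 (OmC q')).

Definition deltaP (S : {set Q * C}) (a : SI) : {set Q * C} :=
  \bigcup_(x in S) [set deltaT x (a, b) | b : SO].

Definition deltaPs (S : {set Q * C}) (w : seq SI) : {set Q * C} :=
  foldl deltaP S w.

(* partial functions Q x C -> 2^(Q x C): None outside the domain *)
Definition pfun := {ffun Q * C -> option {set Q * C}}.

Definition pdom (r : pfun) : {set Q * C} := [set x | r x != None].

Definition rfun (D : {set Q * C}) (w : seq SI) : pfun :=
  [ffun x => if x \in D then Some (deltaPs [set (x.1, OmC x.1)] w) else None].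

Definition inR (k : nat) (r : pfun) : Prop :=
  exists (D : {set Q * C}) (w : seq SI), [/\ D != set0, size w = k & r = rfun D w].

Fixpoint hist (tau : seq (pfun * (Q * C)) -> pfun -> Q * C) (r : nat -> pfun) (n : nat)
  : seq (pfun * (Q * C)) :=
  if n is m.+1 then rcons (hist tau r m) (r m, tau (hist tau r m) (r m)) else [::].

Definition omove tau r n : Q * C := tau (hist tau r n) (r n).

Definition I_legal_upto (k : nat) tau (r : nat -> pfun) (n : nat) : Prop :=
  [/\ forall j, j <= n -> inR k (r j),
      pdom (r 0) = [set (qi, OmC qi)]
    & forall j, j < n -> r j (omove tau r j) = Some (pdom (r j.+1))].

Definition Gk_win (k : nat) : Prop :=
  exists tau : seq (pfun * (Q * C)) -> pfun -> Q * C,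
    (forall r n, I_legal_upto k tau r n -> omove tau r n \in pdom (r n))
    /\ (forall r, (forall n, I_legal_upto k tau r n) ->
          limsup_even (fun i => ssval (omove tau r i).2)).

End DPA.

(* Main.v *)
Require Import Defs.
From mathcomp Require Import all_boot zify.
Set Implicit Arguments. Unset Strict Implicit. Unset Printing Implicit Defensive.

Section Proof.
Variables (Q SI SO : finType) (delta : Q -> SI * SO -> Q) (qi : Q) (Omega : Q -> nat) (k : nat).
Variable sigma : seq SI -> SO.

Local Notation pf := (pfun Omega).

Lemma pdom_rfun (D : {set Q * C Omega}) w : pdom (rfun delta D w) = D.
Proof. by apply/setP => x; rewrite inE ffunE; case: (x \in D). Qed.

Definition chooseW (r : pf) : seq SI :=
  if [pick t : k.-tuple SI | r == rfun delta (pdom r) t] is Some t then val t else [::].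

Lemma chooseW_spec r : inR delta k r ->
  size (chooseW r) = k /\ r = rfun delta (pdom r) (chooseW r).
Proof.
case=> D [w [_ sw ->]]. rewrite /chooseW. case: pickP => [t /eqP Ht | H].
  by split; [rewrite size_tuple | exact Ht].
have := H (Tuple (introT eqP sw)). by rewrite pdom_rfun /= eqxx.
Qed.

Definition aw (r : nat -> pf) (x : SI) j := nth x (chooseW (r (j %/ k))) (j %% k).
Definition Wd (a : nat -> SI) j := (a j, sigma (mkseq a (j + k).+1)).
Definition blk q (s : seq (SI * SO)) := foldl (deltaT delta (Omega:=Omega)) (q, OmC Omega q) s.

Definition G (r : nat -> pf) n : Q * C Omega :=
  if chooseW (r 0) is x :: _ then
    (if n is m.+1 then blk (run delta qi (Wd (aw r x)) (m*k))
                          [seq Wd (aw r x) j | j <- iota (m*k) k]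
     else (qi, OmC Omega qi))
  else (qi, OmC Omega qi).

Definition tau (h : seq (pf * (Q * C Omega))) (r : pf) :=
  let rs := rcons (map fst h) r in G (fun j => nth r rs j) (size rs).-1.

Lemma hist_fst r n : map fst (hist tau r n) = mkseq r n.
Proof. elim: n => [|n IH] //=. by rewrite map_rcons IH mkseqS. Qed.

Lemma G_agree (kpos : 0 < k) r r' n : (forall j, j <= n -> r j = r' j) -> G r n = G r' n.
Proof.
move=> H. rewrite /G (H 0) //. case: (chooseW (r' 0)) => // x _.
case: n H => // m H.
have ha : forall j, j < m.+2 * k -> aw r x j = aw r' x j.
  move=> j hj; rewrite /aw H //. by rewrite -ltnS ltn_divLR.
have hW : forall j, j < m.+1 * k -> Wd (aw r x) j = Wd (aw r' x) j.
  move=> j hj; rewrite /Wd ha; last by rewrite mulSn; lia.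
  congr pair; congr sigma; rewrite /mkseq; apply/eq_in_map => i; rewrite mem_iota => /andP[_ hi].
  apply: ha. rewrite mulSn mulSn; rewrite mulSn in hj; lia.
have hrun : forall t, t <= m.+1 * k -> run delta qi (Wd (aw r x)) t = run delta qi (Wd (aw r' x)) t.
  elim=> [|t IH] ht //=. by rewrite IH ?hW //; lia.
rewrite hrun; last by rewrite mulSn; lia.
congr blk; apply/eq_in_map => j; rewrite mem_iota => /andP[_ hj]; apply: hW.
rewrite mulSn; lia.
Qed.

Lemma omove_G (kpos : 0 < k) r n : omove tau r n = G r n.
Proof.
rewrite /omove /tau hist_fst -mkseqS size_mkseq /=.
by apply: G_agree => // j hj; rewrite nth_mkseq.
Qed.

Lemma maxC_val (c1 c2 : C Omega) : ssval (maxC c1 c2) = maxn (ssval c1) (ssval c2).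
Proof. rewrite /maxC; case: ifP => h; lia. Qed.

Section Blk.
Variable W : nat -> SI * SO.
Local Notation rn := (run delta qi W).

Lemma blk_fst p t : (blk (rn p) [seq W j | j <- iota p t]).1 = rn (p + t).
Proof.
elim: t => [|t IH]; first by rewrite addn0.
by rewrite -addn1 iotaD map_cat /blk foldl_cat /= -/(blk _ _) IH addn1 addnS.
Qed.

Lemma blk_ge p t j : p <= j <= p + t ->
  Omega (rn j) <= ssval (blk (rn p) [seq W j | j <- iota p t]).2.
Proof.
elim: t j => [|t IH] j hj.
  by have -> : j = p by lia.
rewrite -addn1 iotaD map_cat /blk foldl_cat /= -/(blk _ _) maxC_val.
case: (leqP j (p + t)) => hj'.
  have := IH j; lia.
have -> : j = (p + t).+1 by lia.
have := blk_fst p t. rewrite /= => <-. simpl. lia.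
Qed.

Lemma blk_le p t c : (forall j, p <= j <= p + t -> Omega (rn j) <= c) ->
  ssval (blk (rn p) [seq W j | j <- iota p t]).2 <= c.
Proof.
elim: t => [|t IH] H.
  by rewrite /=; apply: H; lia.
rewrite -addn1 iotaD map_cat /blk foldl_cat /= -/(blk _ _) maxC_val geq_max.
rewrite IH; last by move=> j hj; apply: H; lia.
rewrite blk_fst /=. apply: (H (p + t).+1); lia.
Qed.
End Blk.

Lemma blk_mem (S : {set Q * C Omega}) x (s : seq (SI * SO)) : x \in S ->
  foldl (deltaT delta (Omega:=Omega)) x s \in deltaPs delta S (map fst s).
Proof.
elim: s x S => [|[a b] s IH] x S Hx //=.
apply: IH. apply/bigcupP; exists x => //. apply/imsetP; exists b => //.
Qed.

End Proof.

Theorem mainTheorem2 (Q SI SO : finType) (delta : Q -> SI * SO -> Q) (qi : Q)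
  (Omega : Q -> nat) (k : nat) :
  0 < k -> delay_win delta qi Omega k -> Gk_win delta qi Omega k.
Proof.
move=> kpos [sigma Hs]. exists (tau delta qi k sigma). split.
- move=> r n [Hin H0 Hstep]. rewrite omove_G //.
  have [sz0 _] := chooseW_spec (Hin 0 (leq0n n)).
  case: n Hin Hstep => [|m] Hin Hstep.
    rewrite /G; case E: (chooseW delta k (r 0)) => [|x s]; first by rewrite E /= in sz0; lia.
    by rewrite H0 inE.
  have := Hstep m (ltnSn m). rewrite omove_G //.
  have [szm Hm] := chooseW_spec (Hin m (leqW (leqnn m))).
  rewrite {1}Hm /rfun ffunE. case: ifP => // _ [<-].
  rewrite /G; case E: (chooseW delta k (r 0)) => [|x s]; first by rewrite E /= in sz0; lia.
  set W := Wd k sigma (aw delta k r x).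
  have Hq : (match m with 0 => (qi, OmC Omega qi)
            | m'.+1 => blk delta Omega (run delta qi W (m' * k)) [seq W j | j <- iota (m' * k) k] end).1
            = run delta qi W (m * k).
    case: m {Hin Hstep Hm szm} => [|m'] //. rewrite blk_fst. congr run. rewrite mulSn; lia.
  rewrite Hq.
  have Hw : map fst [seq W j | j <- iota (m * k) k] = chooseW delta k (r m).
    rewrite -map_comp /= -[m * k]addn0 iotaDl -map_comp.
    transitivity (mkseq (nth x (chooseW delta k (r m))) (size (chooseW delta k (r m)))); last first.
      by rewrite mkseq_nth.
    rewrite szm /mkseq; apply/eq_in_map => i; rewrite mem_iota => /andP[_ hi] /=.
    rewrite /aw divnMDl // (divn_small hi) addn0 modnMDl (modn_small hi) //.
  rewrite -Hw. apply: blk_mem. by rewrite inE.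
- move=> r Hleg. have [Hin0 _ _] := Hleg 0.
  have [sz0 _] := chooseW_spec (Hin0 0 (leqnn 0)).
  case E: (chooseW delta k (r 0)) sz0 => [|x s] sz0; first by move: sz0 => /=; lia.
  set W := Wd k sigma (aw delta k r x).
  have Hval : forall m, omove (tau delta qi k sigma) r m.+1 =
      blk delta Omega (run delta qi W (m * k)) [seq W j | j <- iota (m * k) k].
    by move=> m; rewrite omove_G // /G E.
  have [c [codd [Hinf [N HN]]]] := Hs (aw delta k r x).
  exists c; split => //; split.
  + move=> M. have [n hn hc] := Hinf ((N + M + 1) * k).
    exists (n %/ k).+1.
      have : N + M + 1 <= n %/ k by rewrite (leq_divRL _ _ kpos).
      lia.
    rewrite Hval. apply/eqP; rewrite eqn_leq; apply/andP; split.
      apply: blk_le => j hj. apply: HN.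
      have : N + M + 1 <= n %/ k by rewrite (leq_divRL _ _ kpos).
      nia.
    rewrite -hc. apply: blk_ge.
    have := divn_eq n k. have := ltn_pmod n kpos. lia.
  + exists N.+1 => -[|m] hm; first by lia.
    rewrite Hval. apply: blk_le => j hj. apply: HN. nia.
Qed.
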